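(* Let $d\ge 2$. Let $\rho_T$ be a density matrix on $\mathbb{C}^2$ with eigenvalues, sorted in decreasing order, $\{\alpha, 1-\alpha\}$, and let $\rho_A$ be a density matrix on $\mathbb{C}^d$ with eigenvalues, sorted in decreasing order, $\beta_1 \ge \beta_2 \ge \dots \ge \beta_d$. Let $U$ be any unitary on $\mathbb{C}^2\otimes\mathbb{C}^d$, and let $\rho_T^{out} = \mathrm{Tr}_A\!\left(U(\rho_T\otimes\rho_A)U^\dagger\right)$ have eigenvalues, sorted in decreasing order, $\{\alpha^{out}, 1-\alpha^{out}\}$. Then $$\alpha^{out} \le \max\left(\alpha, \frac{\beta_1}{\beta_1+\beta_d}\right).$$
   Context: $\mathrm{Tr}_A$ denotes the partial trace over the auxiliary factor $\mathbb{C}^d$; the factor $\mathbb{C}^2$ is the target qubit. *)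

(* Defs.v *)
From HB Require Import structures.
From mathcomp Require Import all_boot all_order all_algebra.
From mathcomp Require Export complex mxtens.
Set Implicit Arguments. Unset Strict Implicit. Unset Printing Implicit Defensive.
Import Order.TTheory GRing.Theory Num.Theory.
Local Open Scope ring_scope.

Definition dagmx (C : numClosedFieldType) m n (A : 'M[C]_(m, n)) : 'M[C]_(n, m) :=
  (map_mx Num.conj A)^T.

Definition density_matrix (C : numClosedFieldType) n (rho : 'M[C]_n) : Prop :=
  [/\ dagmx rho = rho,
      (forall v : 'cV[C]_n, 0 <= (dagmx v *m rho *m v) 0 0)
    & \tr rho = 1].

Definition unitary_mx (C : numClosedFieldType) n (U : 'M[C]_n) : Prop :=
  U *m dagmx U = 1%:M.

Definition eigenvalues_dec (C : numClosedFieldType) n (A : 'M[C]_n) (s : seq C) : Prop :=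
  [/\ size s = n,
      char_poly A = \prod_(x <- s) ('X - x%:P)
    & sorted (fun x y => y <= x) s].

(* Partial trace over the second tensor factor C^d of C^m (x) C^d, with the
   index convention of mxtens (tensmx): (i,j) |-> i*d + j. *)
Definition ptrace2 (C : numClosedFieldType) m d (M : 'M[C]_(m * d)) : 'M[C]_m :=
  \matrix_(i, k) \sum_(j < d) M (mxtens_index (i, j)) (mxtens_index (k, j)).

(* Main.v *)
Require Import Defs.
From HB Require Import structures.
From mathcomp Require Import all_boot all_order all_algebra.
From mathcomp Require Import complex mxtens.
From mathcomp Require Import spectral sesquilinear ring.
Import Order.TTheory GRing.Theory Num.Theory.
Local Open Scope ring_scope.
Set Implicit Arguments. Unset Strict Implicit. Unset Printing Implicit Defensive.

Lemma key_ineq (F : numFieldType) d (a0 a1 m b1 bd N : F) (b x y : 'I_d -> F) :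
  0 < N -> a0 <= m -> a1 <= m -> a0 + a1 = 1 -> 0 <= m -> m <= 1 -> 0 <= bd ->
  (forall t, bd <= b t) -> (forall t, b t <= b1) -> b1 <= m * (b1 + bd) ->
  \sum_t b t = 1 ->
  (forall t, 0 <= x t) -> (forall t, x t <= N) ->
  (forall t, 0 <= y t) -> (forall t, y t <= N) ->
  \sum_t (x t + y t) = d%:R * N ->
  \sum_t (a0 * b t * x t + a1 * b t * y t) <= m * N.
Proof.
move=> N0 a0m a1m a01 m0 m1 bd0 bdb bb1 b1m sb x0 xN y0 yN sxy.
pose mu := (1 - m) * b1.
have H t : a0 * b t * x t + a1 * b t * y t <= m * b t * N + mu * (x t + y t - N).
  rewrite -subr_ge0.
  have -> : a1 = 1 - a0 by rewrite -a01 [a0 + a1]addrC addrK.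
  have: 0 <= N ^+ 2 * (m * b t * N + mu * (x t + y t - N) -
      (a0 * b t * x t + (1 - a0) * b t * y t)).
    have -> : N ^+ 2 * (m * b t * N + mu * (x t + y t - N) -
      (a0 * b t * x t + (1 - a0) * b t * y t)) =
      (N - x t) * (N - y t) * ((m * b t - mu) * N) + x t * (N - y t) * ((m - a0) * b t * N)
      + (N - x t) * y t * ((m - (1 - a0)) * b t * N) + x t * y t * ((1 - m) * (b1 - b t) * N).
      rewrite /mu; ring.
    have bt0 : 0 <= b t := le_trans bd0 (bdb t).
    have N0' := ltW N0.
    have A : 0 <= m * b t - mu.
      rewrite subr_ge0 /mu; apply: le_trans (ler_wpM2l m0 (bdb t)).
      by rewrite mulrBl mul1r lerBlDr -mulrDr addrC.
    have h1 : 0 <= m - (1 - a0) by rewrite -a01 [a0 + a1]addrC addrK subr_ge0.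
    have h2 : 0 <= N - x t by rewrite subr_ge0.
    have h3 : 0 <= N - y t by rewrite subr_ge0.
    have h4 : 0 <= m - a0 by rewrite subr_ge0.
    have h5 : 0 <= 1 - m by rewrite subr_ge0.
    have h6 : 0 <= b1 - b t by rewrite subr_ge0.
    by rewrite !addr_ge0 // !mulr_ge0.
  by rewrite pmulr_rge0 // exprn_gt0.
apply: le_trans (ler_sum _ (fun t _ => H t)) _.
rewrite big_split /= -!mulr_sumr.
under eq_bigr do rewrite mulrAC.
rewrite -mulr_sumr sb mulr1 sumrB sxy sumr_const card_ord mulr_natl subrr mulr0 addr0 //.
Qed.

Section LA.
Variable C : numClosedFieldType.

Lemma dagE m n (A : 'M[C]_(m, n)) : dagmx A = (A ^t*)%sesqui.
Proof. by rewrite /dagmx map_trmx. Qed.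

Lemma dagK m n (A : 'M[C]_(m, n)) : dagmx (dagmx A) = A.
Proof. by rewrite !dagE trmxCK. Qed.

Lemma dagM m n p (A : 'M[C]_(m, n)) (B : 'M[C]_(n, p)) :
  dagmx (A *m B) = dagmx B *m dagmx A.
Proof. by rewrite /dagmx map_mxM trmx_mul. Qed.

Lemma dagE_entry m n (A : 'M[C]_(m, n)) i j : dagmx A i j = (A j i)^*.
Proof. by rewrite !mxE. Qed.

Lemma unitary_dag n (P : 'M[C]_n) : P \is unitarymx -> P *m dagmx P = 1%:M.
Proof. by move/unitarymxP; rewrite dagE. Qed.

Lemma unitary_dag' n (P : 'M[C]_n) : P \is unitarymx -> dagmx P *m P = 1%:M.
Proof. by move/unitary_dag/mulmx1C. Qed.

Lemma herm_normal n (A : 'M[C]_n) : dagmx A = A -> A \is normalmx.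
Proof. by move=> h; rewrite qualifE -dagE h. Qed.

Lemma spec_dec n (A : 'M[C]_n) : A \is normalmx ->
  A = dagmx (spectralmx A) *m diag_mx (spectral_diag A) *m spectralmx A.
Proof.
move=> /orthomx_spectralP h; rewrite {1}h invmx_unitary ?dagE //.
exact: spectral_unitarymx.
Qed.

Lemma char_poly_sim n (Q P M : 'M[C]_n) : Q *m P = 1%:M ->
  char_poly (Q *m M *m P) = char_poly M.
Proof.
move=> QP; rewrite /char_poly /char_poly_mx.
have -> : ('X%:M - map_mx polyC (Q *m M *m P) : 'M_n) =
   map_mx polyC Q *m ('X%:M - map_mx polyC M) *m map_mx polyC P.
  rewrite mulmxBr mulmxBl !map_mxM; congr (_ - _).
  by rewrite scalar_mxC -mulmxA -map_mxM QP map_mx1 mulmx1.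
rewrite !det_mulmx mulrAC -det_mulmx -map_mxM QP map_mx1 det1 mul1r.
by []. Qed.

Lemma char_poly_spec n (A : 'M[C]_n) : A \is normalmx ->
  char_poly A = \prod_(i < n) ('X - (spectral_diag A 0 i)%:P).
Proof.
move=> hA; rewrite {1}(spec_dec hA) char_poly_sim; last first.
  exact/unitary_dag'/spectral_unitarymx.
rewrite char_poly_trig ?diag_mx_is_trig //.
by apply: eq_bigr => i _; rewrite mxE eqxx mulr1n.
Qed.

Lemma root_prod_ord n (a : 'I_n -> C) x :
  root (\prod_(i < n) ('X - (a i)%:P)) x -> exists i, x = a i.
Proof.
rewrite -(big_image _ _ _ _ (fun y => ('X - y%:P : {poly C}))) root_prod_XsubC.
by case/imageP => i _ ->; exists i.
Qed.

Lemma root_prod_ord' n (a : 'I_n -> C) i :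
  root (\prod_(i < n) ('X - (a i)%:P)) (a i).
Proof.
rewrite -(big_image _ _ _ _ (fun y => ('X - y%:P : {poly C}))) root_prod_XsubC.
by apply/imageP; exists i.
Qed.

Lemma spec_diag_ge0 n (A : 'M[C]_n) : A \is normalmx ->
  (forall v : 'cV[C]_n, 0 <= (dagmx v *m A *m v) 0 0) ->
  forall i, 0 <= spectral_diag A 0 i.
Proof.
move=> hA psd i; set P := spectralmx A.
have := psd (dagmx (row i P)); rewrite dagK.
have e : (row i P *m A *m dagmx (row i P)) 0 0 = (P *m A *m dagmx P) i i.
  rewrite -row_mul !mxE; apply: eq_bigr => k _; rewrite !mxE //.
have hD : P *m A *m dagmx P = diag_mx (spectral_diag A).
  rewrite {1}(spec_dec hA) -/P !mulmxA (unitary_dag (spectral_unitarymx A)) mul1mx.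
  by rewrite -mulmxA (unitary_dag (spectral_unitarymx A)) mulmx1.
by rewrite e hD mxE eqxx mulr1n.
Qed.

Lemma spec_trace n (A : 'M[C]_n) : A \is normalmx ->
  \tr A = \sum_i spectral_diag A 0 i.
Proof.
move=> hA; rewrite {1}(spec_dec hA) mxtrace_mulC mulmxA.
by rewrite (unitary_dag (spectral_unitarymx A)) mul1mx mxtrace_diag.
Qed.


Lemma sum_tens m n (F : 'I_(m * n) -> C) :
  \sum_(l < m * n) F l = \sum_(i < m) \sum_(j < n) F (mxtens_index (i, j)).
Proof.
rewrite pair_big /= (reindex (fun p : 'I_m * 'I_n => mxtens_index p)) /=.
  by apply: eq_bigr => -[i j].
by exists (@mxtens_unindex m n) => l _; rewrite (mxtens_indexK, mxtens_unindexK).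
Qed.

Lemma tens1 m n : (1%:M : 'M[C]_m) *t (1%:M : 'M[C]_n) = 1%:M.
Proof.
apply/matrixP => l l'.
case: (mxtens_indexP l) => i j; case: (mxtens_indexP l') => i' j'.
rewrite tensmxE !mxE (inj_eq (can_inj (@mxtens_indexK m n))) xpair_eqE.
by case: (i == i'); case: (j == j'); rewrite ?mulr1 ?mulr0.
Qed.

Lemma dag_tens m n p q (A : 'M[C]_(m, n)) (B : 'M[C]_(p, q)) :
  dagmx (A *t B) = dagmx A *t dagmx B.
Proof. by rewrite /dagmx map_mxT trmx_tens. Qed.

Lemma tens_diag m n (a : 'rV[C]_m) (b : 'rV[C]_n) :
  diag_mx a *t diag_mx b =
  diag_mx (\row_k (a 0 (mxtens_unindex k).1 * b 0 (mxtens_unindex k).2)).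
Proof.
apply/matrixP => l l'.
case: (mxtens_indexP l) => i j; case: (mxtens_indexP l') => i' j'.
rewrite tensmxE !mxE (inj_eq (can_inj (@mxtens_indexK m n))) xpair_eqE mxtens_indexK /=.
by case: eqP => [->|]; case: eqP => [->|]; rewrite ?mulr1n ?mulr0n ?mulr0 ?mul0r.
Qed.

Definition Xs m d n (X : 'M[C]_(m * d, n)) (j : 'I_d) : 'M[C]_(m, n) :=
  \matrix_(i, k) X (mxtens_index (i, j)) k.

Lemma ptrace_decomp m d n (X : 'M[C]_(m * d, n)) (e : 'rV[C]_n) :
  ptrace2 (X *m diag_mx e *m dagmx X) =
  \sum_(j < d) (Xs X j *m diag_mx e *m dagmx (Xs X j)).
Proof.
rewrite /ptrace2 /Xs; apply/matrixP => i k; rewrite !mxE summxE.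
apply: eq_bigr => j _; rewrite !mul_mx_diag !mxE.
by apply: eq_bigr => l _; rewrite !mxE.
Qed.

Lemma quad_diag n (w : 'rV[C]_n) e :
  (w *m diag_mx e *m dagmx w) 0 0 = \sum_k e 0 k * (w 0 k * (w 0 k)^*).
Proof.
rewrite mul_mx_diag !mxE; apply: eq_bigr => k _; rewrite !mxE; ring.
Qed.

Lemma Xs_unitary m d n (X : 'M[C]_(m * d, n)) j :
  X *m dagmx X = 1%:M -> Xs X j *m dagmx (Xs X j) = 1%:M.
Proof.
move=> /matrixP XX; apply/matrixP => i i'.
have := XX (mxtens_index (i, j)) (mxtens_index (i', j)).
rewrite !mxE (inj_eq (can_inj (@mxtens_indexK m d))) xpair_eqE eqxx andbT => <-.
by apply: eq_bigr => k _; rewrite !mxE.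
Qed.

Lemma CS2 (v : 'rV[C]_2) (x : 'cV[C]_2) :
  (\sum_i v 0 i * x i 0) * (\sum_i v 0 i * x i 0)^* <=
  (\sum_i v 0 i * (v 0 i)^*) * (\sum_i x i 0 * (x i 0)^*).
Proof.
rewrite !big_ord_recl !big_ord0 !addr0 -subr_ge0.
set v0 := v 0 0; set v1 := v 0 _; set x0 := x 0 0; set x1 := x _ 0.
have -> : (v0 * (v0)^* + v1 * (v1)^*) * (x0 * (x0)^* + x1 * (x1)^*) -
   (v0 * x0 + v1 * x1) * (v0 * x0 + v1 * x1)^* =
   (v0 * x1^* - v1 * x0^*) * (v0 * x1^* - v1 * x0^*)^*.
  rewrite !(rmorphD, rmorphN, rmorphM) /= !conjCK; ring.
exact: mul_conjC_ge0.
Qed.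

End LA.

Unset Implicit Arguments. Set Strict Implicit.

Theorem theorem2 (R : rcfType) (d : nat) (hd : (2 <= d)%N)
  (rhoT : 'M[R[i]]_2) (rhoA : 'M[R[i]]_d) (U : 'M[R[i]]_(2 * d))
  (alpha alpha_out : R[i]) (beta : seq R[i]) :
  density_matrix rhoT -> density_matrix rhoA -> unitary_mx U ->
  eigenvalues_dec rhoT [:: alpha; 1 - alpha] ->
  eigenvalues_dec rhoA beta ->
  eigenvalues_dec (ptrace2 (U *m (rhoT *t rhoA) *m dagmx U))
                  [:: alpha_out; 1 - alpha_out] ->
  alpha_out <= Num.max alpha
    (nth 0 beta 0 / (nth 0 beta 0 + nth 0 beta d.-1)).
Proof.
move=> [hTh hTpsd hTtr] [hAh hApsd hAtr] hU [_ cpT sT] [szb cpA sB] [_ cpO _].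
have nT := herm_normal hTh; have nA := herm_normal hAh.
set P := spectralmx rhoT; set a := spectral_diag rhoT.
set Q := spectralmx rhoA; set b := spectral_diag rhoA.
have Pu : P \is unitarymx := spectral_unitarymx rhoT.
have Qu : Q \is unitarymx := spectral_unitarymx rhoA.
set P' := P *t Q.
have P'u : P' *m dagmx P' = 1%:M.
  by rewrite /P' dag_tens tensmx_mul !unitary_dag // tens1.
have P'u' : dagmx P' *m P' = 1%:M by apply: mulmx1C.
set e := \row_k (a 0 (mxtens_unindex k).1 * b 0 (mxtens_unindex k).2) : 'rV[R[i]]_(2 * d).
have hT : rhoT *t rhoA = dagmx P' *m diag_mx e *m P'.
  rewrite {1}(spec_dec nT) {1}(spec_dec nA) -/P -/Q -/a -/b.
  by rewrite -!tensmx_mul -tens_diag dag_tens.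
set X := U *m dagmx P'.
have Xu : X *m dagmx X = 1%:M.
  rewrite /X dagM dagK mulmxA -(mulmxA U) P'u' mulmx1.
  by move: hU; rewrite /unitary_mx.
have Xu' : dagmx X *m X = 1%:M by apply: mulmx1C.
have sig : U *m (rhoT *t rhoA) *m dagmx U = X *m diag_mx e *m dagmx X.
  by rewrite hT /X dagM dagK !mulmxA.
rewrite sig in cpO.
set rO := ptrace2 (X *m diag_mx e *m dagmx X) in cpO.
have : root (char_poly rO) alpha_out by rewrite cpO root_prod_XsubC mem_head.
rewrite -eigenvalue_root_char => /eigenvalueP [v hv v0].
set N := (v *m dagmx v) 0 0.
have N0 : 0 < N by rewrite /N dagE -dotmxE dotmx_is_dotmx.
set c := fun k => \sum_(j < d) ((v *m Xs X j) 0 k * ((v *m Xs X j) 0 k)^*).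
have key : alpha_out * N = \sum_k e 0 k * c k.
  have -> : alpha_out * N = (v *m rO *m dagmx v) 0 0 by rewrite hv -scalemxAl mxE.
  rewrite /rO ptrace_decomp mulmx_sumr mulmx_suml summxE.
  have E j : (v *m (Xs X j *m diag_mx e *m dagmx (Xs X j)) *m dagmx v) 0 0 =
     \sum_k e 0 k * ((v *m Xs X j) 0 k * ((v *m Xs X j) 0 k)^*).
    by rewrite -quad_diag dagM !mulmxA.
  rewrite (eq_bigr _ (fun j _ => E j)) exchange_big; apply: eq_bigr => k _.
  by rewrite mulr_sumr.
have c0 k : 0 <= c k by apply: sumr_ge0 => j _; exact: mul_conjC_ge0.
have cN k : c k <= N.
  apply: (@le_trans _ _ (\sum_(j < d) N * \sum_i (Xs X j i k * (Xs X j i k)^*))).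
    apply: ler_sum => j _.
    have := CS2 v (col k (Xs X j)).
    have -> : \sum_i v 0 i * col k (Xs X j) i 0 = (v *m Xs X j) 0 k.
      by rewrite [RHS]mxE; apply: eq_bigr => i _; rewrite [col _ _ _ _]mxE.
    have -> : \sum_i v 0 i * (v 0 i)^* = N.
      by rewrite /N !mxE; apply: eq_bigr => i _; rewrite !mxE.
    have ce i : col k (Xs X j) i 0 = Xs X j i k by rewrite [LHS]mxE.
    by under eq_bigr do rewrite !ce.
  rewrite -mulr_sumr -[leRHS]mulr1; apply: ler_wpM2l; first exact: ltW.
  have : (dagmx X *m X) k k = 1 by rewrite Xu' mxE eqxx.
  rewrite mxE => <-; rewrite exchange_big /= sum_tens le_eqVlt; apply/orP; left; apply/eqP.
  apply: eq_bigr => i _; apply: eq_bigr => j _; rewrite !mxE mulrC //.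
have csum : \sum_k c k = d%:R * N.
  rewrite /c exchange_big /=.
  have E j : \sum_k ((v *m Xs X j) 0 k * ((v *m Xs X j) 0 k)^*) = N.
    transitivity (((v *m Xs X j) *m dagmx (v *m Xs X j)) 0 0).
      by rewrite mxE; apply: eq_bigr => k _; rewrite !mxE.
    by rewrite dagM mulmxA -(mulmxA v) Xs_unitary // mulmx1.
  by rewrite (eq_bigr _ (fun j _ => E j)) sumr_const card_ord mulr_natl.
have split : \sum_k e 0 k * c k = \sum_t (a 0 ord0 * b 0 t * c (mxtens_index (ord0, t))
    + a 0 (lift ord0 ord0) * b 0 t * c (mxtens_index (lift ord0 ord0, t))).
  rewrite sum_tens !big_ord_recl big_ord0 addr0 -big_split; apply: eq_bigr => t _.
  by rewrite !mxE !mxtens_indexK.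
have csum' : \sum_t (c (mxtens_index (ord0, t)) + c (mxtens_index (lift ord0 ord0, t)))
    = d%:R * N.
  by rewrite -csum sum_tens !big_ord_recl big_ord0 addr0 -big_split.
have aS s : a 0 s \in [:: alpha; 1 - alpha].
  by rewrite -root_prod_XsubC -cpT char_poly_spec // (root_prod_ord' (fun i => a 0 i)).
have a1al : 1 - alpha <= alpha by move: sT => /= /andP [].
have al1 : 0 <= 1 - alpha.
  have : root (char_poly rhoT) (1 - alpha) by rewrite cpT root_prod_XsubC !inE eqxx orbT.
  by rewrite char_poly_spec // => /root_prod_ord [s ->]; exact: spec_diag_ge0.
have aleal s : a 0 s <= alpha.
  by move: (aS s); rewrite !inE => /orP [/eqP -> | /eqP ->].
have asum : a 0 ord0 + a 0 (lift ord0 ord0) = 1.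
  by rewrite -hTtr spec_trace // !big_ord_recl big_ord0 addr0.
have bS t : b 0 t \in beta.
  by rewrite -root_prod_XsubC -cpA char_poly_spec // (root_prod_ord' (fun i => b 0 i)).
have trR : transitive (fun x y : R[i] => y <= x) by move=> x y z h1 h2; exact: le_trans h2 h1.
have rfR : reflexive (fun x y : R[i] => y <= x) by move=> x; exact: lexx.
set b1 := nth 0 beta 0; set bd := nth 0 beta d.-1.
have bnd x : x \in beta -> bd <= x /\ x <= b1.
  move=> xb; have ix : (index x beta < d)%N by rewrite -szb index_mem.
  rewrite -(nth_index 0 xb); split.
    apply: (sorted_leq_nth trR rfR 0 sB); rewrite ?inE ?szb //; first by case: (d) hd.
    by case: (d) ix hd => // n.
  by apply: (sorted_leq_nth trR rfR 0 sB); rewrite ?inE ?szb //; case: (d) hd.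
have bd0 : 0 <= bd.
  have : bd \in beta by rewrite mem_nth // szb; case: (d) hd.
  rewrite -root_prod_XsubC -cpA char_poly_spec // => /root_prod_ord [t ->].
  exact: spec_diag_ge0.
have bsum : \sum_t b 0 t = 1 by rewrite -hAtr spec_trace.
have b1pos : 0 < b1.
  have h : 1 <= b1 *+ d.
    have -> : b1 *+ d = \sum_(t < d) b1 by rewrite sumr_const card_ord.
    by rewrite -bsum; apply: ler_sum => t _; exact: (bnd _ (bS t)).2.
  by rewrite -(pmulrn_lgt0 _ (_ : (0 < d)%N)) ?(lt_le_trans ltr01 h) //; case: (d) hd.
have den : 0 < b1 + bd by apply: lt_le_trans b1pos _; rewrite lerDl.
have main m : alpha <= m -> 0 <= m -> m <= 1 -> b1 <= m * (b1 + bd) -> alpha_out <= m.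
  move=> am m0 m1 bm; rewrite -(ler_pM2r N0) key split.
  apply: (@key_ineq _ d _ _ m b1 bd N (fun t => b 0 t)) => //.
  - exact: le_trans (aleal _) am.
  - exact: le_trans (aleal _) am.
  - by move=> t; exact: (bnd _ (bS t)).1.
  - by move=> t; exact: (bnd _ (bS t)).2.
have alr : alpha \is Num.real.
  have -> : alpha = 1 - (1 - alpha) by ring.
  by rewrite rpredB ?rpred1 ?ger0_real.
have qr : b1 / (b1 + bd) \is Num.real.
  by rewrite ger0_real // divr_ge0 // ltW.
case/orP: (real_leVge alr qr) => h.
  rewrite max_r //; apply: main => //.
  - exact: le_trans (le_trans al1 a1al) h.
  - by rewrite ler_pdivrMr // mul1r lerDl.
  - by rewrite divfK ?lt0r_neq0.
rewrite max_l //; apply: main => //.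
- exact: le_trans al1 a1al.
- by rewrite -subr_ge0.
- by rewrite -ler_pdivrMr.
Qed.
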